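(* Let $P$ be a poset. (1) If $I$ is a non-empty index set and $\mathcal{U}_i$ is a frame-generating join-specification for $P$ for each $i\in I$, then $\bigcup_{i\in I}\mathcal{U}_i$ is frame-generating. (2) Even finite unions of maximal frame-generating join-specifications need not be maximal: there exist a poset $Q$ and maximal frame-generating join-specifications $\mathcal{U}_1,\mathcal{U}_2$ for $Q$ such that $\mathcal{U}_1\cup\mathcal{U}_2$ is not maximal. (3) If $I$ is a non-empty index set and $\mathcal{U}_i$ is a maximal frame-generating join-specification for $P$ for each $i\in I$, then $\bigcap_{i\in I}\mathcal{U}_i$ is a maximal frame-generating join-specification. (4) Even finite intersections of frame-generating join-specifications need not be frame-generating: there exist a poset $Q$ and frame-generating join-specifications $\mathcal{U}_1,\mathcal{U}_2$ for $Q$ such that $\mathcal{U}_1\cap\mathcal{U}_2$ is not frame-generating.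
   Context: A join-specification for a poset $P$ is a set $\mathcal{U}\subseteq\wp(P)$ such that $\bigvee S$ exists in $P$ for every $S\in\mathcal{U}$, and $\{p\}\in\mathcal{U}$ for every $p\in P$. A $\mathcal{U}$-ideal is a down-closed $C\subseteq P$ such that $\bigvee S\in C$ whenever $S\in\mathcal{U}$ and $S\subseteq C$. $\mathcal{I}_{\mathcal{U}}$ is the complete lattice of $\mathcal{U}$-ideals ordered by inclusion; $\Gamma_{\mathcal{U}}(S)$ is the smallest $\mathcal{U}$-ideal containing $S$. $\mathcal{U}^+=\{S\subseteq P:\bigvee S\text{ exists and }\bigvee S\in\Gamma_{\mathcal{U}}(S)\}$, and $\mathcal{U}$ is maximal if $\mathcal{U}=\mathcal{U}^+$. $\mathcal{U}$ is frame-generating if $\mathcal{I}_{\mathcal{U}}$ is a frame (a complete lattice satisfying $x\wedge\bigvee Y=\bigvee_{y\in Y}(x\wedge y)$). *)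

(* Defs.v *)
From HB Require Import structures.
From mathcomp Require Import all_boot all_order.
From mathcomp Require Import boolp classical_sets.

Set Implicit Arguments.
Unset Strict Implicit.
Unset Printing Implicit Defensive.

Local Open Scope classical_set_scope.

Section Bounds.
Variable A : Type.
Variable L : set A.
Variable le : A -> A -> Prop.

Definition is_lub_in (Y : set A) (x : A) : Prop :=
  L x /\ (forall y, Y y -> le y x) /\
  (forall z, L z -> (forall y, Y y -> le y z) -> le x z).

Definition is_glb_in (Y : set A) (x : A) : Prop :=
  L x /\ (forall y, Y y -> le x y) /\
  (forall z, L z -> (forall y, Y y -> le z y) -> le z x).

(* (L, le) is a complete lattice in which binary meets distribute over
   arbitrary joins:  x /\ \/Y = \/_{y in Y} (x /\ y). *)
Definition is_frame : Prop :=
  (forall Y, Y `<=` L -> exists x, is_lub_in Y x) /\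
  (forall Y, Y `<=` L -> exists x, is_glb_in Y x) /\
  (forall x Y, L x -> Y `<=` L ->
     forall j, is_lub_in Y j ->
     forall m, is_glb_in [set x; j] m ->
     forall j', is_lub_in [set m' | exists2 y, Y y & is_glb_in [set x; y] m'] j' ->
     m = j').
End Bounds.

Section JoinSpec.
Context {d : Order.disp_t} {P : porderType d}.

Definition is_join (S : set P) (x : P) : Prop :=
  (forall s, S s -> (s <= x)%O) /\
  (forall y, (forall s, S s -> (s <= y)%O) -> (x <= y)%O).

Definition join_exists (S : set P) : Prop := exists x, is_join S x.

Definition join_spec (U : set (set P)) : Prop :=
  (forall S, U S -> join_exists S) /\ (forall p : P, U [set p]).

Definition U_ideal (U : set (set P)) (C : set P) : Prop :=
  (forall x y : P, C y -> (x <= y)%O -> C x) /\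
  (forall S, U S -> S `<=` C -> forall x, is_join S x -> C x).

Definition Gamma (U : set (set P)) (S : set P) : set P :=
  [set x | forall C, U_ideal U C -> S `<=` C -> C x].

Definition Uplus (U : set (set P)) : set (set P) :=
  [set S | exists x, is_join S x /\ Gamma U S x].

Definition maximal_spec (U : set (set P)) : Prop := U = Uplus U.

Definition frame_generating (U : set (set P)) : Prop :=
  is_frame (U_ideal U) (fun C D : set P => C `<=` D).

End JoinSpec.

(* Main.v *)
Require Import Defs.
From HB Require Import structures.
From mathcomp Require Import all_boot all_order.
From mathcomp Require Import boolp classical_sets.
Local Open Scope classical_set_scope.
Import Order.POrderTheory.

Section Gen.
Context {d : Order.disp_t} {P : porderType d}.
Implicit Types (U : set (set P)) (S T : set P).

Lemma join_uniq S a b : is_join S a -> is_join S b -> a = b.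
Proof.
move=> [ua la] [ub lb]; apply/le_anti; rewrite (la b ub) (lb a ua) //.
Qed.

Lemma is_join1 (p : P) : is_join [set p] p.
Proof. by split=> [s ->|y]; [exact: lexx| apply]. Qed.

Lemma ideal_dc U C : U_ideal U C -> forall {x y : P}, C y -> (x <= y)%O -> C x.
Proof. exact: proj1. Qed.
Lemma ideal_jc U C : U_ideal U C -> forall {S}, U S -> S `<=` C -> forall {x}, is_join S x -> C x.
Proof. exact: proj2. Qed.
Arguments ideal_dc {U C} _ {x y}.
Arguments ideal_jc {U C} _ {S} _ _ {x}.

Lemma Gamma_ideal U S : U_ideal U (Gamma U S).
Proof.
split=> [x y Gy xy C CI SC|S' US' S'G x jx C CI SC].
- exact: (ideal_dc CI (Gy C CI SC) xy).
- by apply: (ideal_jc CI US' _ jx) => s /S'G; apply.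
Qed.

Lemma sub_Gamma U S : S `<=` Gamma U S.
Proof. by move=> s Ss C _; apply. Qed.

Lemma Gamma_min U S C : U_ideal U C -> S `<=` C -> Gamma U S `<=` C.
Proof. by move=> CI SC x; apply. Qed.

Lemma Gamma_join U T S a : U S -> S `<=` Gamma U T -> is_join S a -> Gamma U T a.
Proof. by move=> US ST ja; apply: (ideal_jc (Gamma_ideal U T) US ST ja). Qed.
Arguments Gamma_join {U T S a}.

Lemma Gamma_mono U U' S : U `<=` U' -> Gamma U S `<=` Gamma U' S.
Proof.
move=> UU' x Gx C CI SC; apply: Gx SC; split; first exact: (@ideal_dc _ _ CI).
move=> S' /UU' US'; exact: (@ideal_jc _ _ CI _ US').
Qed.

Lemma down_ideal U (p : P) : U_ideal U [set r | (r <= p)%O].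
Proof.
split=> [x y /= yp xy|S' _ S'p x [_ lx]]; first exact: le_trans xy yp.
exact: lx.
Qed.

Definition Tset S (p : P) := [set r | (r <= p)%O /\ exists2 s, S s & (r <= s)%O].

Definition Char U := forall S, U S -> forall a, is_join S a ->
  forall p, (p <= a)%O -> Gamma U (Tset S p) p.

Lemma cap_ideal U (Y : set (set P)) : Y `<=` U_ideal U ->
  U_ideal U [set r | forall D, Y D -> D r].
Proof.
move=> YL; split=> [x y /= Hy xy D YD|S' US' S'C x jx D YD].
- exact: (ideal_dc (YL D YD)) (Hy D YD) xy.
- by apply: (ideal_jc (YL D YD) US' _ jx) => s /S'C; apply.
Qed.

Definition bigU (Y : set (set P)) := [set r | exists2 D, Y D & D r].

Lemma lub_Gamma U (Y : set (set P)) :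
  is_lub_in (U_ideal U) (fun C D : set P => C `<=` D) Y (Gamma U (bigU Y)).
Proof.
split; first exact: Gamma_ideal.
split=> [D YD r Dr|z zI zub]; first by apply: sub_Gamma; exists D.
apply: Gamma_min => // r [D YD Dr]; exact: zub YD r Dr.
Qed.

Lemma glb_cap U (Y : set (set P)) : Y `<=` U_ideal U ->
  is_glb_in (U_ideal U) (fun C D : set P => C `<=` D) Y [set r | forall D, Y D -> D r].
Proof.
move=> YL; split; first exact: cap_ideal.
split=> [D YD r /= H|z zI zlb r zr D YD]; first exact: H.
exact: zlb YD r zr.
Qed.

Lemma char_frame U : Char U -> frame_generating U.
Proof.
move=> HC; split; first by move=> Y _; eexists; exact: lub_Gamma.
split; first by move=> Y YL; eexists; exact: glb_cap.
move=> x Y Lx YL j [Lj [jub jlub]] m [Lm [mlb mglb]] j' [Lj' [j'ub j'lub]].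
apply/seteqP; split; last first.
  apply: j'lub => // m' [y Yy [Lm' [m'lb _]]].
  apply: mglb => // D [->|->]; first by apply: m'lb; left.
  move=> r /(m'lb y); move=> /(_ (or_intror erefl)); exact: jub.
pose C := [set r | forall q, (q <= r)%O -> x q -> j' q].
have xdc := proj1 Lx.
have CI : U_ideal U C.
  split=> [r r' Cr' rr' q qr xq|S US SC a ja q qa xq].
    by apply: Cr' => //; exact: (le_trans qr rr').
  apply: (HC S US a ja q qa) => // r [rq [s Ss rs]].
  apply: (SC s Ss) => //; exact: (xdc _ _ xq rq).
have jC : j `<=` C.
  apply: jlub => // y Yy r yr q qr xq.
  have yI := YL y Yy.
  have yq : y q by exact: (proj1 yI _ _ yr qr).
  pose m0 := [set t | x t /\ y t].
  have Lm0 : U_ideal U m0.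
    split=> [a b [xb yb] ab|S US Sm0 a ja]; first split.
    - exact: (xdc _ _ xb ab).
    - exact: (proj1 yI _ _ yb ab).
    split; first by apply: (proj2 Lx S US _ a ja) => s /Sm0 [].
    by apply: (proj2 yI S US _ a ja) => s /Sm0 [].
  apply: (j'ub m0) => //; exists y => //; split=> //; split.
    by move=> D [->|->] t [].
  by move=> z _ zlb t zt; split; [exact: zlb x (or_introl erefl) t zt|
     exact: zlb y (or_intror erefl) t zt].
move=> r mr; apply: (jC r) => //.
  by apply: (mlb j (or_intror erefl)).
by apply: (mlb x (or_introl erefl)).
Qed.

Lemma frame_char U : frame_generating U -> Char U.
Proof.
move=> [_ [_ H]] S US a ja p pa.
pose x := [set r | (r <= p)%O].
pose Y := [set D | exists2 s, S s & D = [set r | (r <= s)%O]].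
have YL : Y `<=` U_ideal U by move=> D [s _ ->]; exact: down_ideal.
pose j := Gamma U (bigU Y).
pose m := [set r | forall D, [set x; j] D -> D r].
pose M := [set m' | exists2 y, Y y & is_glb_in (U_ideal U) (fun C D : set P => C `<=` D) [set x; y] m'].
have xjL : [set x; j] `<=` U_ideal U.
  by move=> D [->|->]; [exact: down_ideal| exact: Gamma_ideal].
have e := H x Y (down_ideal U p) YL j (lub_Gamma U Y) m
  (glb_cap U _ xjL) _ (lub_Gamma U M).
have mp : m p.
  move=> D [->|->]; first exact: lexx.
  apply: (ideal_dc (Gamma_ideal U _) _ pa).
  apply: (Gamma_join US _ ja) => s Ss; apply: sub_Gamma.
  by exists [set r | (r <= s)%O]; [exists s| exact: lexx].
move: mp; rewrite e; apply: Gamma_min; first exact: Gamma_ideal.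
move=> r [m' [y [s Ss ->] [_ [m'lb _]]] m'r]; apply: sub_Gamma; split.
  exact: (m'lb x (or_introl erefl) r m'r).
by exists s => //; exact: (m'lb _ (or_intror erefl) r m'r).
Qed.

Arguments join_uniq {S a b}.
Lemma ideal_anti U U' C : U `<=` U' -> U_ideal U' C -> U_ideal U C.
Proof.
move=> UU' CI; split; first exact: (@ideal_dc _ _ CI).
move=> S' /UU' US'; exact: (@ideal_jc _ _ CI _ US').
Qed.

Arguments ideal_anti {U U' C}.
Arguments Gamma_mono {U U' S}.
Lemma sub_Uplus U : (forall S, U S -> join_exists S) -> U `<=` Uplus U.
Proof.
move=> HJ S US; have [x jx] := HJ S US; exists x; split=> //.
exact: (Gamma_join US (sub_Gamma _ _) jx).
Qed.

Arguments sub_Uplus {U}.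
Lemma ideal_Uplus U : (forall S, U S -> join_exists S) -> U_ideal (Uplus U) = U_ideal U.
Proof.
move=> HJ; apply/funext => C; apply/propext; split.
  exact: (ideal_anti (sub_Uplus HJ)).
move=> CI; split; first exact: (@ideal_dc _ _ CI).
move=> S [x [jx Gx]] SC y jy; rewrite (join_uniq jy jx); exact: Gx.
Qed.

Lemma Gamma_Uplus U : (forall S, U S -> join_exists S) -> Gamma (Uplus U) = Gamma U.
Proof. by move=> HJ; rewrite /Gamma ideal_Uplus //. Qed.

Lemma Uplus_idem U : (forall S, U S -> join_exists S) -> Uplus (Uplus U) = Uplus U.
Proof. by move=> HJ; rewrite [in LHS]/Uplus Gamma_Uplus //. Qed.

Lemma js_Uplus U : (forall S, U S -> join_exists S) -> join_spec (Uplus U).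
Proof.
move=> HJ; split; first by move=> S [x [jx _]]; exists x.
move=> p; exists p; split; first exact: is_join1.
exact: sub_Gamma.
Qed.

Lemma Tset_in S (p r s : P) : (r <= p)%O -> S s -> (r <= s)%O -> Tset S p r.
Proof. by move=> rp Ss rs; split=> //; exists s. Qed.
Arguments Tset_in {S p r} s.

Lemma Gamma_triv U S (p s : P) : S s -> (p <= s)%O -> Gamma U (Tset S p) p.
Proof. by move=> Ss ps; apply: sub_Gamma; apply: (Tset_in s) => //; exact: lexx. Qed.

Lemma Gamma_joinT U S' S (p a : P) : U S' -> S' `<=` Tset S p -> is_join S' a ->
  Gamma U (Tset S p) a.
Proof. move=> US' sub ja; apply: (Gamma_join US' _ ja) => r /sub; exact: sub_Gamma. Qed.

Lemma char_single U (p0 a p : P) : is_join [set p0] a -> (p <= a)%O ->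
  Gamma U (Tset [set p0] p) p.
Proof. move=> ja; rewrite -(join_uniq (is_join1 p0) ja) => pa; exact: Gamma_triv. Qed.
End Gen.
Arguments ideal_dc {d P U C} _ {x y}.
Arguments ideal_jc {d P U C} _ {S} _ _ {x}.
Arguments Gamma_join {d P U T S a}.
Arguments join_uniq {d P S a b}.
Arguments ideal_anti {d P U U' C}.
Arguments Gamma_mono {d P U U' S}.
Arguments sub_Uplus {d P U}.
Arguments Tset_in {d P S p r} s.
Arguments frame_char {d P U}.
Arguments char_frame {d P U}.
Arguments Gamma_triv {d P U S p} s.
Arguments Gamma_joinT {d P U} S' {S p a}.
Arguments char_single {d P U p0 a p}.

Lemma part1 : (forall (d : Order.disp_t) (P : porderType d) (I : Type) (U : I -> set (set P)),
     inhabited I ->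
     (forall i, join_spec (U i) /\ frame_generating (U i)) ->
     frame_generating [set S | exists i, U i S]).
Proof.
move=> d P I U _ HU; apply: char_frame => S [i Ui] a ja p pa.
apply: (Gamma_mono (U:=U i)); first by move=> S' ?; exists i.
exact: (frame_char (proj2 (HU i)) _ Ui _ ja _ pa).
Qed.

Lemma part3 : (forall (d : Order.disp_t) (P : porderType d) (I : Type) (U : I -> set (set P)),
     inhabited I ->
     (forall i, join_spec (U i) /\ frame_generating (U i) /\ maximal_spec (U i)) ->
     let V := [set S | forall i, U i S] in
     join_spec V /\ frame_generating V /\ maximal_spec V).
Proof.
move=> d P I U [i0] HU V.
have VU i : V `<=` U i by move=> S; apply.
have jsV : join_spec V.
  split; first by move=> S VS; exact: (proj1 (proj1 (HU i0)) S (VS i0)).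
  by move=> p i; exact: (proj2 (proj1 (HU i))).
split=> //; split.
  apply: char_frame => S VS a ja p pa.
  have Gi i : Gamma (U i) (Tset S p) p :=
    frame_char (proj1 (proj2 (HU i))) _ (VS i) _ ja _ pa.
  have jT : is_join (Tset S p) p.
    split; first by move=> r [].
    by move=> b bub; exact: (Gi i0 _ (down_ideal (U i0) b) bub).
  have VT : V (Tset S p).
    by move=> i; rewrite (proj2 (proj2 (HU i))); exists p; split.
  exact: (Gamma_join VT (sub_Gamma _ _) jT).
apply/seteqP; split.
  move=> S VS; have [x jx] := proj1 jsV S VS; exists x; split=> //.
  exact: (Gamma_join VS (sub_Gamma _ _) jx).
move=> S [x [jx Gx]] i; rewrite (proj2 (proj2 (HU i))); exists x; split=> //.
exact: (Gamma_mono (VU i) _ Gx).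
Qed.
Inductive E := E0 | Ex | Ez | Es | Eq | Et.
Definition e2n e := match e with E0 => 0 | Ex => 1 | Ez => 2 | Es => 3 | Eq => 4 | Et => 5 end.
Definition n2e n := match n with 0 => Some E0 | 1 => Some Ex | 2 => Some Ez | 3 => Some Es | 4 => Some Eq | 5 => Some Et | _ => None end.
Lemma e2nK : pcancel e2n n2e. Proof. by case. Qed.
HB.instance Definition _ := Countable.copy E (pcan_type e2nK).
Definition Ele (a b : E) : bool :=
  match a, b with
  | E0, _ => true
  | Ex, (Ex | Es | Eq | Et) => true
  | Ez, (Ez | Eq | Et) => true
  | Es, (Es | Et) => true
  | Eq, (Eq | Et) => true
  | Et, Et => true
  | _, _ => false end.
Lemma Ele_refl : reflexive Ele. Proof. by case. Qed.
Lemma Ele_anti : antisymmetric Ele. Proof. by case; case. Qed.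
Lemma Ele_trans : transitive Ele. Proof. by case; case; case. Qed.
HB.instance Definition _ := Order.Le_isPOrder.Build (Order.Disp tt tt) E Ele_refl Ele_anti Ele_trans.
Lemma leE (a b : E) : (a <= b)%O = Ele a b. Proof. by []. Qed.

Lemma J1 : is_join [set Ex; Ez] Eq.
Proof.
split=> [s [->|->] //|y H].
by move: (H Ex (or_introl erefl)) (H Ez (or_intror erefl)); clear H; case: y.
Qed.
Lemma J2 : is_join [set Eq; Es] Et.
Proof.
split=> [s [->|->] //|y H].
by move: (H Eq (or_introl erefl)) (H Es (or_intror erefl)); clear H; case: y.
Qed.
Lemma J3 : is_join [set Ex; Ez; Es] Et.
Proof.
split=> [s [[->|->]|->] //|y H].
by move: (H Ex (or_introl (or_introl erefl))) (H Ez (or_introl (or_intror erefl)))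
  (H Es (or_intror erefl)); clear H; case: y.
Qed.
Lemma J4 : is_join [set Es; Ez] Et.
Proof.
split=> [s [->|->] //|y H].
by move: (H Es (or_introl erefl)) (H Ez (or_intror erefl)); clear H; case: y.
Qed.
Lemma J5 : is_join [set E0; Ex; Ez] Eq.
Proof.
split=> [s [[->|->]|->] //|y H].
by move: (H Ex (or_introl (or_intror erefl))) (H Ez (or_intror erefl)); clear H; case: y.
Qed.

Definition U01 : set (set E) := [set S | (exists p, S = [set p]) \/ S = [set Ex; Ez]].
Definition U02 : set (set E) := [set S | (exists p, S = [set p]) \/ S = [set Eq; Es]].

Lemma U01J S : U01 S -> join_exists S.
Proof. by case=> [[p ->]|->]; [exists p; exact: is_join1| exists Eq; exact: J1]. Qed.
Lemma U02J S : U02 S -> join_exists S.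
Proof. by case=> [[p ->]|->]; [exists p; exact: is_join1| exists Et; exact: J2]. Qed.

Lemma U01C : Char U01.
Proof.
move=> S [[p0 ->]|->] a ja p pa; first exact: char_single ja pa.
move: pa; rewrite -(join_uniq J1 ja); case: p => // pa.
- by apply: (Gamma_triv Ex) => //; left.
- by apply: (Gamma_triv Ex) => //; left.
- by apply: (Gamma_triv Ez) => //; right.
apply: (Gamma_joinT ([set Ex; Ez])) J1; first by right.
by move=> r [->|->]; [apply: (Tset_in Ex) => //; left | apply: (Tset_in Ez) => //; right].
Qed.

Lemma U02C : Char U02.
Proof.
move=> S [[p0 ->]|->] a ja p pa; first exact: char_single ja pa.
move: pa; rewrite -(join_uniq J2 ja); case: p => // pa.
- by apply: (Gamma_triv Eq) => //; left.
- by apply: (Gamma_triv Eq) => //; left.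
- by apply: (Gamma_triv Eq) => //; left.
- by apply: (Gamma_triv Es) => //; right.
- by apply: (Gamma_triv Eq) => //; left.
apply: (Gamma_joinT ([set Eq; Es])) J2; first by right.
by move=> r [->|->]; [apply: (Tset_in Eq) => //; left | apply: (Tset_in Es) => //; right].
Qed.

Lemma part2 : (exists (d : Order.disp_t) (Q : porderType d) (U1 U2 : set (set Q)),
     join_spec U1 /\ frame_generating U1 /\ maximal_spec U1 /\
     join_spec U2 /\ frame_generating U2 /\ maximal_spec U2 /\
     ~ maximal_spec (U1 `|` U2)).
Proof.
exists _, E, (Uplus U01), (Uplus U02).
split; first exact: js_Uplus U01J.
split; first by rewrite /frame_generating ideal_Uplus; [exact: char_frame U01C| exact: U01J].
split; first by rewrite /maximal_spec Uplus_idem //; exact: U01J.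
split; first exact: js_Uplus U02J.
split; first by rewrite /frame_generating ideal_Uplus; [exact: char_frame U02C| exact: U02J].
split; first by rewrite /maximal_spec Uplus_idem //; exact: U02J.
move=> H.
have : Uplus (Uplus U01 `|` Uplus U02) [set Ex; Ez; Es].
  exists Et; split; first exact: J3.
  move=> C CI SC.
  have Cq : C Eq.
    apply: (ideal_jc CI (S:=[set Ex; Ez])) J1; first by left; apply: sub_Uplus U01J _ _; right.
    by move=> r [->|->]; apply: SC; [left; left| left; right].
  apply: (ideal_jc CI (S:=[set Eq; Es])) J2; first by right; apply: sub_Uplus U02J _ _; right.
  by move=> r [->|->] //; apply: SC; right.
rewrite -H => -[] [x [jx Gx]]; rewrite (join_uniq jx J3) in Gx.
- pose C1 : set E := [set r | r != Et].
  have : C1 Et; last by [].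
  apply: Gx; last by move=> r [[->|->]|->].
  split; first by move=> a b; case: a; case: b.
  move=> S [[p0 ->]|->] SC a ja.
    by rewrite -(join_uniq (is_join1 p0) ja); apply: SC.
  by rewrite -(join_uniq J1 ja).
- pose C2 : set E := [set r | (r != Et) && (r != Eq)].
  have : C2 Et; last by [].
  apply: Gx; last by move=> r [[->|->]|->].
  split; first by move=> a b; case: a; case: b.
  move=> S [[p0 ->]|->] SC a ja.
    by rewrite -(join_uniq (is_join1 p0) ja); apply: SC.
  by have := SC Eq (or_introl erefl).
Qed.

Definition U1' : set (set E) := [set S | (exists p, S = [set p]) \/ S = [set Es; Ez] \/ S = [set Ex; Ez]].
Definition U2' : set (set E) := [set S | (exists p, S = [set p]) \/ S = [set Es; Ez] \/ S = [set E0; Ex; Ez]].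

Lemma U1'C : Char U1'.
Proof.
move=> S [[p0 ->]|[->|->]] a ja p pa; first exact: char_single ja pa.
  move: pa; rewrite -(join_uniq J4 ja); case: p => // pa.
  - by apply: (Gamma_triv Es) => //; left.
  - by apply: (Gamma_triv Es) => //; left.
  - by apply: (Gamma_triv Ez) => //; right.
  - by apply: (Gamma_triv Es) => //; left.
  - apply: (Gamma_joinT [set Ex; Ez]) J1; first by right; right.
    by move=> r [->|->]; [apply: (Tset_in Es) => //; left | apply: (Tset_in Ez) => //; right].
  - apply: (Gamma_joinT [set Es; Ez]) J4; first by right; left.
    by move=> r [->|->]; [apply: (Tset_in Es) => //; left | apply: (Tset_in Ez) => //; right].
move: pa; rewrite -(join_uniq J1 ja); case: p => // pa.
- by apply: (Gamma_triv Ex) => //; left.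
- by apply: (Gamma_triv Ex) => //; left.
- by apply: (Gamma_triv Ez) => //; right.
apply: (Gamma_joinT [set Ex; Ez]) J1; first by right; right.
by move=> r [->|->]; [apply: (Tset_in Ex) => //; left | apply: (Tset_in Ez) => //; right].
Qed.

Lemma U2'C : Char U2'.
Proof.
move=> S [[p0 ->]|[->|->]] a ja p pa; first exact: char_single ja pa.
  move: pa; rewrite -(join_uniq J4 ja); case: p => // pa.
  - by apply: (Gamma_triv Es) => //; left.
  - by apply: (Gamma_triv Es) => //; left.
  - by apply: (Gamma_triv Ez) => //; right.
  - by apply: (Gamma_triv Es) => //; left.
  - apply: (Gamma_joinT [set E0; Ex; Ez]) J5; first by right; right.
    by move=> r [[->|->]|->]; [apply: (Tset_in Es) => //; left | apply: (Tset_in Es) => //; left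
      | apply: (Tset_in Ez) => //; right].
  - apply: (Gamma_joinT [set Es; Ez]) J4; first by right; left.
    by move=> r [->|->]; [apply: (Tset_in Es) => //; left | apply: (Tset_in Ez) => //; right].
move: pa; rewrite -(join_uniq J5 ja); case: p => // pa.
- by apply: (Gamma_triv E0) => //; left; left.
- by apply: (Gamma_triv Ex) => //; left; right.
- by apply: (Gamma_triv Ez) => //; right.
apply: (Gamma_joinT [set E0; Ex; Ez]) J5; first by right; right.
by move=> r [[->|->]|->]; [apply: (Tset_in E0) => //; left; left
   | apply: (Tset_in Ex) => //; left; right | apply: (Tset_in Ez) => //; right].
Qed.

Lemma part4 : (exists (d : Order.disp_t) (Q : porderType d) (U1 U2 : set (set Q)),
     join_spec U1 /\ frame_generating U1 /\
     join_spec U2 /\ frame_generating U2 /\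
     ~ frame_generating (U1 `&` U2)).
Proof.
exists _, E, U1', U2'.
split.
  split; last by move=> p; left; exists p.
  by move=> S [[p ->]|[->|->]]; [exists p; exact: is_join1|exists Et; exact: J4|exists Eq; exact: J1].
split; first exact: char_frame U1'C.
split.
  split; last by move=> p; left; exists p.
  by move=> S [[p ->]|[->|->]]; [exists p; exact: is_join1|exists Et; exact: J4|exists Eq; exact: J5].
split; first exact: char_frame U2'C.
move=> H.
have VS : (U1' `&` U2') [set Es; Ez] by split; right; left.
have := frame_char H _ VS _ J4 Eq erefl.
pose C0 : set E := [set r | (r == E0) || (r == Ex) || (r == Ez)].
move=> G; have : C0 Eq; last by [].
apply: G; last first.
  by move=> r [rq [s [->|->] rs]]; move: rq rs; case: r.
split; first by move=> a b; case: a; case: b.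
move=> S [[[p0 ->]|[->|->]] H2] SC a ja.
- by rewrite -(join_uniq (is_join1 p0) ja); apply: SC.
- by have := SC Es (or_introl erefl).
case: H2 => [[p0 e]|[e|e]].
- have h1 : [set p0] Ex by rewrite -e; left.
  have h2 : [set p0] Ez by rewrite -e; right.
  by move: h1 h2; rewrite /set1 /= => <-.
- have : [set Es; Ez] Ex by rewrite -e; left.
  by case.
- have : [set Ex; Ez] E0 by rewrite e; left; left.
  by case.
Qed.

Theorem theorem4p6 :
  (* (1) unions of frame-generating join-specifications *)
  (forall (d : Order.disp_t) (P : porderType d) (I : Type) (U : I -> set (set P)),
     inhabited I ->
     (forall i, join_spec (U i) /\ frame_generating (U i)) ->
     frame_generating [set S | exists i, U i S]) /\
  (* (2) a union of two maximal frame-generating ones need not be maximal *)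
  (exists (d : Order.disp_t) (Q : porderType d) (U1 U2 : set (set Q)),
     join_spec U1 /\ frame_generating U1 /\ maximal_spec U1 /\
     join_spec U2 /\ frame_generating U2 /\ maximal_spec U2 /\
     ~ maximal_spec (U1 `|` U2)) /\
  (* (3) intersections of maximal frame-generating join-specifications *)
  (forall (d : Order.disp_t) (P : porderType d) (I : Type) (U : I -> set (set P)),
     inhabited I ->
     (forall i, join_spec (U i) /\ frame_generating (U i) /\ maximal_spec (U i)) ->
     let V := [set S | forall i, U i S] in
     join_spec V /\ frame_generating V /\ maximal_spec V) /\
  (* (4) an intersection of two frame-generating ones need not be frame-generating *)
  (exists (d : Order.disp_t) (Q : porderType d) (U1 U2 : set (set Q)),
     join_spec U1 /\ frame_generating U1 /\
     join_spec U2 /\ frame_generating U2 /\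
     ~ frame_generating (U1 `&` U2)).
Proof.
split; first exact: part1.
split; first exact: part2.
split; first exact: part3.
exact: part4.
Qed.
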